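(* Let $G$ be a finite $d$-regular graph and let $k<d$ be a positive integer. Let $S=(v_1,\ldots,v_m)$, $m\geq1$, be a maximal $k$-$L$-sequence of $G$ (no vertex can be appended to the end of $S$ to obtain a longer $k$-$L$-sequence), and let $x=v_m$ be its last vertex. Then there exists a vertex $y\neq x$, $y\in N(x)$, such that $y$ lies in the open neighborhoods $N(v_j)$ of exactly $k-1$ of the vertices $v_1,\ldots,v_{m-1}$ (i.e., $x$ footprints $y$ for the $k$-th time).
   Context: For a vertex $v$, $N(v)$ is its open neighborhood and $N[v]=N(v)\cup\{v\}$. A sequence $S=(v_1,\ldots,v_m)$ of distinct vertices is a $k$-$L$-sequence if for each $i$ there is $u_i\in N[v_i]$ such that the number of indices $j<i$ with $u_i\in N(v_j)$ is less than $k$. A vertex $v_i$ of $S$ is said to footprint $u$ for the $r$-th time if $u\in N[v_i]$ and $u$ lies in $N(v_j)$ for exactly $r-1$ indices $j<i$. *)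

(* Defs.v *)
(* A finite simple graph is a symmetric irreflexive relation
   e : rel T on a finType T. *)
From mathcomp Require Import all_boot.
Set Implicit Arguments. Unset Strict Implicit. Unset Printing Implicit Defensive.

Definition openN (T : finType) (e : rel T) (v : T) : {set T} := [set u | e v u].

Definition regular (T : finType) (e : rel T) (d : nat) : Prop :=
  forall v : T, #|openN e v| = d.

Definition footcount (T : finType) (e : rel T) (p : seq T) (u : T) : nat :=
  count (fun w => u \in openN e w) p.

(* k-L-sequence: distinct vertices; for each entry v_i (with prefix p =
   (v_1,...,v_{i-1})) there is u \in N[v_i] lying in N(v_j) for fewer than
   k indices j < i. *)
Definition is_kLseq (T : finType) (e : rel T) (k : nat) (s : seq T) : Prop :=
  uniq s /\
  forall (p : seq T) (v : T) (q : seq T), s = p ++ v :: q ->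
    exists u : T, (u \in v |: openN e v) /\ footcount e p u < k.

Definition maximal_kLseq (T : finType) (e : rel T) (k : nat) (s : seq T) : Prop :=
  is_kLseq e k s /\ forall w : T, ~ is_kLseq e k (rcons s w).

(* Main.v *)
Require Import Defs.
From mathcomp Require Import all_boot.

Lemma fc_ge (T : finType) (e : rel T) (d k : nat)
    (e_sym : symmetric e) (reg : regular e d) (k_le_d : k <= d)
    (s : seq T) (s_max : maximal_kLseq e k s) (u : T) :
  k <= footcount e s u.
Proof.
case: s_max => [[Us Hs] Hmax].
case: (leqP k (footcount e s u)) => // Hlt.
case: (boolP [forall w, e u w ==> (w \in s)]) => Hall.
  have : d <= footcount e s u.
    rewrite -(reg u) /footcount -size_filter cardE.
    apply: uniq_leq_size; first exact: enum_uniq.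
    move=> w; rewrite mem_enum inE => Huw.
    rewrite mem_filter inE -e_sym Huw /=.
    by move/forallP: Hall => /(_ w) /implyP; apply.
  move=> H; exfalso; move: (leq_trans k_le_d H); by rewrite leqNgt Hlt.
exfalso.
move/forallPn: Hall => [w]; rewrite negb_imply => /andP [Huw Hws].
apply: (Hmax w); split.
  by rewrite rcons_uniq Us andbT.
move=> p v q.
case/lastP: q => [|q z].
  rewrite cats1 => /rcons_inj [<- <-].
  exists u; split => //.
  by rewrite !inE -e_sym Huw orbT.
rewrite -rcons_cons -rcons_cat => /rcons_inj [Hs' _].
exact: (Hs p v q).
Qed.

Theorem mainTheorem10 (T : finType) (e : rel T) (d k : nat)
    (e_sym : symmetric e) (e_irr : irreflexive e) (reg : regular e d)
    (k_pos : 0 < k) (k_lt_d : k < d)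
    (s : seq T) (s_nonempty : 0 < size s) (s_max : maximal_kLseq e k s)
    (x : T) (x_last : x = last x s) :
  exists y : T, [/\ y != x, y \in openN e x &
    footcount e (take (size s).-1 s) y = k.-1].
Proof.
have Hge := @fc_ge _ _ _ _ e_sym reg (ltnW k_lt_d) _ s_max.
move: s_nonempty s_max x_last Hge.
case/lastP: s => [//|p z] _ s_max.
rewrite last_rcons => Ez Hge; subst z.
have Htake : take (size (rcons p x)).-1 (rcons p x) = p.
  by rewrite size_rcons /= -cats1 take_size_cat.
rewrite Htake.
case: s_max => [[_ Hs] _].
have [u [Hu Hfc]] := Hs p x [::] (esym (cats1 p x)).
have := Hge u.
rewrite /footcount -cats1 count_cat /= addn0.
rewrite -/(footcount e p u).
move: Hu Hfc; rewrite !inE => /orP [/eqP ->|Hxu] Hfc.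
  rewrite e_irr addn0 => H; exfalso; move: (leq_trans Hfc H).
  by rewrite ltnn.
rewrite Hxu addn1 => H.
exists u; split.
- by apply/eqP => Hux; move: Hxu; rewrite Hux e_irr.
- by rewrite inE.
- by apply/eqP; rewrite eqn_leq -ltnS prednK // Hfc -ltnS prednK // H.
Qed.
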